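(* Let $H=(V,E)$ be a finite simple graph, let $M$ be a maximum $2$-matching of $H$, and let $(v_0,\dots,v_{2i+2};x_0,x_2,\dots,x_{2i})$ be a B-alternating path saving an object $O_0$ of $M$. Define $$M'=\bigl(M\setminus\{v_{2j+1}v_{2j+2}:0\le j\le i\}\bigr)\cup\{x_{2j}v_{2j+1}:0\le j\le i\}.$$ Then $M'$ is a maximum $2$-matching of $H$. Moreover, the number of components of $(V,M')$ that are $0$-paths or $1$-paths is exactly one less than the corresponding number for $(V,M)$.
   Context: A $2$-matching of $H$ is a set $M\subseteq E$ in which every vertex is incident to at most two edges of $M$. It is maximum if $|M|$ is as large as possible. The components of $(V,M)$ are paths and cycles. A single vertex counts as a $0$-path, and a $k$-path has $k$ edges. An object of $M$ is the vertex set of a component of $(V,M)$ that is a $0$-path or a $1$-path. A B-alternating path saving the object $O_0$ consists of pairwise distinct vertices $v_0,v_1,\dots,v_{2i+2}$ (with $i\ge 0$), together with vertices $x_0,x_2,\dots,x_{2i}$, satisfying: (1) $v_0\in O_0$ and $x_0=v_0$. (2) For each $j=1,\dots,i$ there is a component $P_j$ of $(V,M)$ that is a path with $2$, $3$ or $4$ edges, and $P_1,\dots,P_i$ are pairwise distinct. The vertex $v_{2j-1}$ is an internal vertex of $P_j$, and it is the middle vertex of $P_j$ if $P_j$ has $4$ edges. The vertex $v_{2j}$ is a neighbour of $v_{2j-1}$ on $P_j$. Let $O_j$ be the vertex set of the component of $P_j$ minus the edge $v_{2j-1}v_{2j}$ that contains $v_{2j}$. Then $x_{2j}\in O_j$.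 (3) $x_{2j}v_{2j+1}\in E\setminus M$ for every $j=0,\dots,i$. (4) The vertex $v_{2i+1}$ lies on a component $Q$ of $(V,M)$ different from $P_1,\dots,P_i$. The component $Q$ is either a cycle, or a path with at least $5$ edges, or a path with exactly $4$ edges of which $v_{2i+1}$ is not the middle vertex. (5) $v_{2i+1}v_{2i+2}\in M$, and if $Q$ is a path then the component of $Q$ minus the edge $v_{2i+1}v_{2i+2}$ containing $v_{2i+2}$ has at least $3$ vertices. *)

(* Defs.v *)
From mathcomp Require Import all_boot.
Set Implicit Arguments. Unset Strict Implicit. Unset Printing Implicit Defensive.

Section Graphs.
Variable T : finType.

Definition simple_graph (E : {set {set T}}) : Prop :=
  forall f, f \in E -> #|f| = 2.

Definition two_matching (E M : {set {set T}}) : Prop :=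
  M \subset E /\ forall w : T, #|[set f in M | w \in f]| <= 2.

Definition max_two_matching (E M : {set {set T}}) : Prop :=
  two_matching E M /\ forall M', two_matching E M' -> #|M'| <= #|M|.

Definition madj (M : {set {set T}}) : rel T := fun a b => [set a; b] \in M.

Definition comp (M : {set {set T}}) (u : T) : {set T} :=
  [set w | connect (madj M) u w].

Definition is_component (M : {set {set T}}) (C : {set T}) : Prop :=
  exists u, C = comp M u.

Definition edges_in (M : {set {set T}}) (C : {set T}) : {set {set T}} :=
  [set f in M | f \subset C].

Definition path_edges (p : seq T) : {set {set T}} :=
  [set f : {set T} | f \in [seq [set a.1; a.2] | a <- zip p (behead p)]].

Definition kpath_seq (M : {set {set T}}) (C : {set T}) (k : nat) (p : seq T) : bool :=
  [&& uniq p, size p == k.+1, [set a in p] == C & edges_in M C == path_edges p].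

Definition is_kpath (M : {set {set T}}) (C : {set T}) (k : nat) : bool :=
  [exists p : (k.+1).-tuple T, kpath_seq M C k p].

Definition is_cycle (M : {set {set T}}) (C : {set T}) : Prop :=
  exists p : seq T, [/\ uniq p, 3 <= size p, [set a in p] = C &
                        edges_in M C = path_edges (p ++ take 1 p)].

Definition is_object (M : {set {set T}}) (C : {set T}) : bool :=
  [exists u, C == comp M u] && (is_kpath M C 0 || is_kpath M C 1).

Definition num_objects (M : {set {set T}}) : nat :=
  #|[set C : {set T} | is_object M C]|.

Definition internal_vertex (M : {set {set T}}) (C : {set T}) (k : nat) (a : T) : Prop :=
  exists p : seq T, kpath_seq M C k p /\
    exists m, [/\ 0 < m < k, a = nth a p m & (k = 4 -> m = 2)].

Definition middle_vertex (M : {set {set T}}) (C : {set T}) (a : T) : Prop :=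
  exists p : seq T, kpath_seq M C 4 p /\ a = nth a p 2.

Definition B_alternating (E M : {set {set T}}) (O0 : {set T}) (i : nat)
    (v x : nat -> T) : Prop :=
  [/\ uniq [seq v k | k <- iota 0 (2 * i + 3)],
      is_object M O0 /\ v 0 \in O0 /\ x 0 = v 0,
      (exists (P : nat -> {set T}) (Q : {set T}),
        [/\ (forall j, 1 <= j <= i ->
               [/\ is_component M (P j),
                   (exists k, [/\ 2 <= k <= 4, is_kpath M (P j) k &
                                 internal_vertex M (P j) k (v (2 * j - 1))]),
                   v (2 * j) \in P j /\ [set v (2 * j - 1); v (2 * j)] \in M &
                   x (2 * j) \in comp (M :\ [set v (2 * j - 1); v (2 * j)]) (v (2 * j))]),
            (forall j1 j2, 1 <= j1 <= i -> 1 <= j2 <= i -> j1 <> j2 -> P j1 <> P j2),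
            [/\ is_component M Q, v (2 * i + 1) \in Q & (forall j, 1 <= j <= i -> Q <> P j)],
            (is_cycle M Q \/ (exists k, 5 <= k /\ is_kpath M Q k) \/
              (is_kpath M Q 4 /\ ~ middle_vertex M Q (v (2 * i + 1)))) &
            ((exists k, is_kpath M Q k) ->
               3 <= #|comp (M :\ [set v (2 * i + 1); v (2 * i + 2)]) (v (2 * i + 2))|)]),
      (forall j, j <= i -> [set x (2 * j); v (2 * j + 1)] \in E :\: M) &
      [set v (2 * i + 1); v (2 * i + 2)] \in M].

Definition switch (M : {set {set T}}) (i : nat) (v x : nat -> T) : {set {set T}} :=
  (M :\: [set [set v (2 * j + 1); v (2 * j + 2)] | j : 'I_i.+1])
    :|: [set [set x (2 * j); v (2 * j + 1)] | j : 'I_i.+1].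

End Graphs.

(* Main.v *)
Require Import Defs.
From mathcomp Require Import all_boot zify.
Require Import Defs.
Set Implicit Arguments. Unset Strict Implicit. Unset Printing Implicit Defensive.

Section Gen.
Variable T : finType.
Implicit Types (M N : {set {set T}}) (a b c u w z : T) (C S Y : {set T}).

Definition edges2 M := forall g, g \in M -> #|g| = 2.
Definition D M w := [set g in M | w \in g].

Lemma madj_sym M : symmetric (madj M).
Proof. by move=> a b; rewrite /madj setUC. Qed.

Lemma csym M a b : connect (madj M) a b = connect (madj M) b a.
Proof. exact: (sym_connect_sym (madj_sym M)). Qed.

Lemma comp_self M a : a \in comp M a.
Proof. by rewrite inE connect0. Qed.

Lemma comp_same M a b : b \in comp M a -> comp M b = comp M a.
Proof.
rewrite inE => Hab; apply/setP => w; rewrite !inE.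
apply/idP/idP => H; first exact: connect_trans Hab H.
by rewrite csym in Hab; exact: connect_trans Hab H.
Qed.

Lemma comp_disj M C1 C2 a : is_component M C1 -> is_component M C2 ->
  a \in C1 -> a \in C2 -> C1 = C2.
Proof. by move=> [u1 ->] [u2 ->] H1 H2; rewrite -(comp_same H1) -(comp_same H2). Qed.

Lemma comp_adj M a b : [set a; b] \in M -> b \in comp M a.
Proof. by move=> H; rewrite inE connect1. Qed.

Lemma comp_closed M C a b : is_component M C -> a \in C -> [set a; b] \in M -> b \in C.
Proof.
move=> [u ->] Ha Hab; rewrite -(comp_same Ha); exact: comp_adj.
Qed.

Lemma pair_eq a b c d : [set a; b] = [set c; d] -> (a = c /\ b = d) \/ (a = d /\ b = c).
Proof.
move=> H.
have Ha : a \in [set c; d] by rewrite -H !inE eqxx.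
have Hb : b \in [set c; d] by rewrite -H !inE eqxx orbT.
have Hc : c \in [set a; b] by rewrite H !inE eqxx.
have Hd : d \in [set a; b] by rewrite H !inE eqxx orbT.
move: Ha Hb Hc Hd; rewrite !inE => /orP[]/eqP Ha /orP[]/eqP Hb /orP[]/eqP Hc /orP[]/eqP Hd;
  subst; auto.
Qed.

Lemma pair_neq M a b : edges2 M -> [set a; b] \in M -> a != b.
Proof. by move=> H2 /H2; rewrite cards2; case: (a != b). Qed.

Lemma edge_of M g a : edges2 M -> g \in M -> a \in g -> exists b, g = [set a; b].
Proof.
move=> H2 Hg Ha; have /cards2P [p [q [_ Hpq]]] : #|g| == 2 by rewrite H2.
move: Ha; rewrite Hpq !inE => /orP[]/eqP ->; first by exists q.
by exists p; rewrite setUC.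
Qed.

Lemma zlt (p : seq T) t : (t < minn (size p) (size p).-1) = (t.+1 < size p).
Proof. by rewrite leq_min; case: p => //= a p'; rewrite ltnS; case: ltnP => //= H; lia. Qed.

Lemma nth_zip_pe (p : seq T) z t : t.+1 < size p ->
  nth (z, z) (zip p (behead p)) t = (nth z p t, nth z p t.+1).
Proof.
move=> Ht; rewrite nth_zip_cond size_zip size_behead /= nth_behead.
by rewrite zlt Ht.
Qed.

Lemma pe_mem (p : seq T) z t : t.+1 < size p -> [set nth z p t; nth z p t.+1] \in path_edges p.
Proof.
move=> Ht; rewrite inE; apply/mapP; exists (nth z p t, nth z p t.+1) => //.
rewrite -nth_zip_pe //; apply: mem_nth; rewrite size_zip size_behead.
by rewrite zlt.
Qed.

Lemma pe_inv (p : seq T) z g : g \in path_edges p ->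
  exists2 t, t.+1 < size p & g = [set nth z p t; nth z p t.+1].
Proof.
rewrite inE => /mapP [pr Hpr ->].
have [t Ht Hnt] := nthP (z, z) Hpr.
have Ht' : t.+1 < size p.
  by move: Ht; rewrite size_zip size_behead zlt.
by exists t => //; rewrite -Hnt nth_zip_pe.
Qed.

Lemma kpath_card M C k p : kpath_seq M C k p -> #|C| = k.+1.
Proof. by case/and4P => Hu /eqP Hs /eqP HC _; rewrite -HC cardsE (card_uniqP Hu) Hs. Qed.

Lemma is_kpath_card M C k : is_kpath M C k -> #|C| = k.+1.
Proof. by case/existsP => p /kpath_card. Qed.

Lemma cycle_card M C : is_cycle M C -> 3 <= #|C|.
Proof. by case=> p [Hu H3 HC _]; rewrite -HC cardsE (card_uniqP Hu). Qed.

Lemma obj_small M C : is_object M C -> #|C| <= 2.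
Proof. by case/andP => _ /orP[]/is_kpath_card ->. Qed.

Lemma kpath_mem M C k p z s : kpath_seq M C k p -> s < size p -> nth z p s \in C.
Proof. by case/and4P => _ _ /eqP <- _ Hs; rewrite inE mem_nth. Qed.

Lemma kpath_edge M C k p z t : kpath_seq M C k p -> t.+1 < size p ->
  [set nth z p t; nth z p t.+1] \in M.
Proof.
case/and4P => _ _ _ /eqP He Ht.
by have := pe_mem z Ht; rewrite -He inE => /andP[].
Qed.

Lemma kpath_nbr M C k p z s b : is_component M C -> kpath_seq M C k p -> s < size p ->
  [set nth z p s; b] \in M ->
  (0 < s /\ b = nth z p s.-1) \/ (s.+1 < size p /\ b = nth z p s.+1).
Proof.
move=> HC Hk Hs Hb.
have HsC := kpath_mem z Hk Hs.
have HbC := comp_closed HC HsC Hb.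
move: (Hk) => /and4P [Hu _ _ /eqP He].
have : [set nth z p s; b] \in edges_in M C.
  rewrite inE Hb /=; apply/subsetP => w; rewrite !inE => /orP[]/eqP -> //.
rewrite He => /(pe_inv z) [t Ht Heq].
have Ht0 : t < size p by lia.
case: (pair_eq Heq) => [[H1 H2]|[H1 H2]].
- right; move/eqP: H1; rewrite nth_uniq //.
  by move/eqP => ->; split.
- left; move/eqP: H1; rewrite nth_uniq //.
  by move/eqP => ->; split.
Qed.

Lemma kpath_split_hi M C k p z m w : is_component M C -> kpath_seq M C k p ->
  m.+1 < size p ->
  connect (madj (M :\ [set nth z p m; nth z p m.+1])) (nth z p m.+1) w ->
  exists2 t, m < t < size p & w = nth z p t.
Proof.
move=> HC Hk Hm /connectP [q Hq ->].
move: Hq; set e := [set nth z p m; nth z p m.+1] => Hq.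
suff H : forall q s, m < s -> s < size p -> path (madj (M :\ e)) (nth z p s) q ->
    exists2 t, m < t < size p & last (nth z p s) q = nth z p t.
  exact: H Hq.
clear Hq q; elim=> [|b q IH] s Hs1 Hs2 /=; first by move=> _; exists s => //; rewrite Hs1.
case/andP => Hb Hq.
move: Hb; rewrite /madj !inE => /andP [Hne Hb].
case: (kpath_nbr HC Hk Hs2 Hb) => [[H0 Hbe]|[H1 Hbe]]; subst b.
- case: s H0 Hne Hq Hs1 Hs2 Hb => // s _ /= Hne Hq Hs1 Hs2 _.
  have Hms : m < s.
    case: (ltnP m s) => // Hle.
    have Hsm : s = m by lia.
    by move: Hne; rewrite Hsm /e /= setUC eqxx.
  apply: (IH s) => //; lia.
- by apply: (IH s.+1) => //; lia.
Qed.

Lemma kpath_split_lo M C k p z m w : is_component M C -> kpath_seq M C k p ->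
  m.+1 < size p ->
  connect (madj (M :\ [set nth z p m.+1; nth z p m])) (nth z p m) w ->
  exists2 t, t <= m & w = nth z p t.
Proof.
move=> HC Hk Hm /connectP [q Hq ->].
move: Hq; set e := [set nth z p m.+1; nth z p m] => Hq.
suff H : forall q s, s <= m -> path (madj (M :\ e)) (nth z p s) q ->
    exists2 t, t <= m & last (nth z p s) q = nth z p t.
  exact: H Hq.
clear Hq q; elim=> [|b q IH] s Hs1 /=; first by move=> _; exists s.
case/andP => Hb Hq.
move: Hb; rewrite /madj !inE => /andP [Hne Hb].
have Hs2 : s < size p by lia.
case: (kpath_nbr HC Hk Hs2 Hb) => [[H0 Hbe]|[H1 Hbe]]; subst b.
- by apply: (IH s.-1) => //; case: s H0 Hs1 {Hs2 Hb Hne Hq} => // s; lia.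
- have Hms : s < m.
    case: (ltnP s m) => // Hle.
    have Hsm : s = m by lia.
    by move: Hne; rewrite Hsm /e /= setUC eqxx.
  by apply: (IH s.+1).
Qed.


Lemma deg_le1 M a : edges2 M ->
  (forall b c, [set a; b] \in M -> [set a; c] \in M -> b = c) -> #|D M a| <= 1.
Proof.
move=> H2 Hu; apply/card_le1_eqP => g1 g2; rewrite !inE => /andP [G1 A1] /andP [G2 A2].
have [b1 E1] := edge_of H2 G1 A1; have [b2 E2] := edge_of H2 G2 A2.
by subst; rewrite (Hu b1 b2).
Qed.

Lemma card3 (A : {set T}) a b c : a != b -> a != c -> b != c ->
  a \in A -> b \in A -> c \in A -> 3 <= #|A|.
Proof.
move=> Hab Hac Hbc Ha Hb Hc.
have -> : 3 = #|a |: (b |: [set c])|.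
  by rewrite !cardsU1 cards1 !inE negb_or Hab Hac Hbc.
by apply: subset_leq_card; apply/subsetP => w; rewrite !inE => /orP[|/orP[]]/eqP ->.
Qed.

Lemma internal_nbrs M C k a : internal_vertex M C k a ->
  exists b c, [/\ b != c, [set a; b] \in M & [set a; c] \in M].
Proof.
case=> p [Hk [m [/andP [Hm0 Hmk] Ha _]]].
have Hs : size p = k.+1 by case/and4P: Hk => _ /eqP.
case: m Hm0 Hmk Ha => // m _ Hmk Ha.
exists (nth a p m), (nth a p m.+2); split.
- move: (Hk) => /and4P [Hu _ _ _]; rewrite nth_uniq ?Hs //; [apply/eqP; lia | lia].
- by rewrite {1}Ha setUC; apply: (kpath_edge a Hk); lia.
- by rewrite {1}Ha; apply: (kpath_edge a Hk); lia.
Qed.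

Lemma cycle_nbrs M C a : is_cycle M C -> a \in C ->
  exists b c, [/\ b != c, [set a; b] \in M & [set a; c] \in M].
Proof.
case=> p [Hu H3 HC He] Ha.
have : a \in p by move: Ha; rewrite -HC inE.
case/(nthP a) => s Hs0 Hsa; have Hs : s < size p := Hs0; clear Hs0.
have Ht1 : take 1 p = [:: nth a p 0] by move: H3; case: (p) => // b q _; rewrite /= take0.
rewrite Ht1 in He.
have HinM : forall t, t.+1 < (size p).+1 ->
    [set nth a (p ++ [:: nth a p 0]) t; nth a (p ++ [:: nth a p 0]) t.+1] \in M.
  move=> t Ht; have := @pe_mem (p ++ [:: nth a p 0]) a t.
  by rewrite size_cat addn1 -He inE => /(_ Ht) /andP [].
have Hn : forall t, t < size p -> nth a (p ++ [:: nth a p 0]) t = nth a p t.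
  by move=> t Ht; rewrite nth_cat Ht.
have Hnn : nth a (p ++ [:: nth a p 0]) (size p) = nth a p 0.
  by rewrite nth_cat ltnn subnn.
have Enx : [set a; nth a p (if s.+1 < size p then s.+1 else 0)] \in M.
  case: (ltnP s.+1 (size p)) => Hs1.
  - by have := HinM s; rewrite Hn // Hn // Hsa; apply; lia.
  - have Hsn : s.+1 = size p by lia.
    by have := HinM s; rewrite Hn // Hsn Hnn Hsa; apply; lia.
have Epv : [set a; nth a p (if s is s'.+1 then s' else (size p).-1)] \in M.
  case: s Hs Hsa {Enx} => [|s] Hs Hsa.
  - have := HinM (size p).-1; rewrite Hn; last lia.
    rewrite prednK; last lia.
    by rewrite Hnn Hsa setUC; apply; lia.
  - have := HinM s; rewrite Hn; last lia.
    by rewrite Hn // Hsa setUC; apply; lia.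
exists (nth a p (if s.+1 < size p then s.+1 else 0)),
  (nth a p (if s is s'.+1 then s' else (size p).-1)); split => //.
rewrite nth_uniq //.
- case: (ltnP s.+1 (size p)) => Hs1; case: s Hs Hsa Enx Epv Hs1 => [|s] Hs _ _ _ Hs1; apply/eqP; move: Hs Hs1 H3; move: (size p) => n; lia.
- by case: ifP => H; move: H Hs H3; move: (size p) => n; lia.
- by case: s Hs Hsa Enx Epv => [|s] Hs _ _ _; move: Hs H3; move: (size p) => n; lia.
Qed.

Lemma transfer N1 N2 S u w :
  (forall g, g \in N1 -> g \notin N2 -> exists2 z, z \in g & z \notin S) ->
  (forall w, connect (madj N1) u w -> w \in S) ->
  connect (madj N1) u w -> connect (madj N2) u w.
Proof.
move=> HD HS /connectP [p Hp ->].
suff H : forall a, connect (madj N1) u a -> connect (madj N2) u a ->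
    path (madj N1) a p -> connect (madj N2) u (last a p).
  by apply: H; rewrite ?connect0.
elim: p {Hp} => [|b p IH] a H1 H2 //=.
case/andP => Hab Hp; apply: IH Hp; first exact: connect_trans H1 (connect1 Hab).
apply: connect_trans H2 (connect1 _); rewrite /madj.
case: (boolP ([set a; b] \in N2)) => // Hn.
have [z Hz HzS] := HD _ Hab Hn.
have H1b : connect (madj N1) u b := connect_trans H1 (connect1 Hab).
move: Hz; rewrite !inE => /orP[]/eqP Hz; subst z.
- by rewrite (HS _ H1) in HzS.
- by rewrite (HS _ H1b) in HzS.
Qed.

Lemma transfer2 N1 N2 Y u w :
  (forall g, g \in N2 -> g \notin N1 -> g \subset Y) ->
  (forall w, connect (madj N1) u w -> w \notin Y) ->
  connect (madj N2) u w -> connect (madj N1) u w.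
Proof.
move=> HD HS /connectP [p Hp ->].
suff H : forall a, connect (madj N1) u a -> path (madj N2) a p ->
    connect (madj N1) u (last a p).
  by apply: H; rewrite ?connect0.
elim: p {Hp} => [|b p IH] a H1 //=.
case/andP => Hab Hp; apply: IH Hp.
apply: (connect_trans H1 (connect1 _)); rewrite /madj.
case: (boolP ([set a; b] \in N1)) => // Hn.
have := HD _ Hab Hn => /subsetP /(_ a); rewrite !inE eqxx => /(_ isT) Ha.
by move: (HS _ H1); rewrite Ha.
Qed.

Definition sdiff N1 N2 Y :=
  forall g, (g \in N1) != (g \in N2) -> g \subset Y /\ g != set0.

Lemma sdiff_sym N1 N2 Y : sdiff N1 N2 Y -> sdiff N2 N1 Y.
Proof. by move=> H g; rewrite eq_sym; apply: H. Qed.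

Lemma comp_eq N1 N2 Y u : sdiff N1 N2 Y ->
  (forall w, connect (madj N1) u w -> w \notin Y) -> comp N1 u = comp N2 u.
Proof.
move=> HD HS; apply/setP => w; rewrite !inE; apply/idP/idP.
- apply: (transfer (S := ~: Y)).
  + move=> g H1 H2; have [HY Hne] : g \subset Y /\ g != set0 by apply: HD; rewrite H1 (negbTE H2).
    case: (set_0Vmem g) => [E0|[z Hz]]; first by rewrite E0 eqxx in Hne.
    by exists z => //; rewrite inE negbK (subsetP HY).
  + by move=> w' /HS; rewrite inE.
- apply: (transfer2 (Y := Y)); last by [].
  move=> g H2 H1.
  by case: (HD g) => //; rewrite H2 (negbTE H1).
Qed.

Lemma obj_transfer N1 N2 Y C : sdiff N1 N2 Y ->
  (forall y, y \in Y -> y \notin C) -> is_object N1 C -> is_object N2 C.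
Proof.
move=> HD HY /andP [/existsP [u /eqP HC] Hk].
have Hce : comp N1 u = comp N2 u.
  apply: (comp_eq HD) => w Hw; apply/negP => /HY; rewrite HC inE Hw //.
have Hed : edges_in N1 C = edges_in N2 C.
  apply/setP => g; rewrite !inE.
  case: (boolP (g \subset C)) => HgC; last by rewrite !andbF.
  rewrite !andbT; apply/eqP/negPn/negP => Hne.
  have [HgY Hg0] := HD g Hne.
  case: (set_0Vmem g) => [E0|[z Hz]]; first by rewrite E0 eqxx in Hg0.
  by move: (HY z (subsetP HgY z Hz)); rewrite (subsetP HgC z Hz).
apply/andP; split; first by apply/existsP; exists u; rewrite HC Hce.
by move: Hk; rewrite /is_kpath /kpath_seq Hed.
Qed.

End Gen.

Section Main.
Variable T : finType.
Variables (E M : {set {set T}}) (O0 : {set T}) (i : nat) (v x : nat -> T)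
  (P : nat -> {set T}) (Q : {set T}).
Hypothesis HE : simple_graph E.
Hypothesis HMs : M \subset E.
Hypothesis HMd : forall w : T, #|[set f in M | w \in f]| <= 2.
Hypothesis HMmax : forall M', two_matching E M' -> #|M'| <= #|M|.
Hypothesis Hu : uniq [seq v k | k <- iota 0 (2 * i + 3)].
Hypothesis HO : is_object M O0.
Hypothesis Hv0 : v 0 \in O0.
Hypothesis Hx0 : x 0 = v 0.
Hypothesis HP : forall j, 1 <= j <= i ->
  [/\ is_component M (P j),
      (exists k, [/\ 2 <= k <= 4, is_kpath M (P j) k &
                    internal_vertex M (P j) k (v (2 * j - 1))]),
      v (2 * j) \in P j /\ [set v (2 * j - 1); v (2 * j)] \in M &
      x (2 * j) \in comp (M :\ [set v (2 * j - 1); v (2 * j)]) (v (2 * j))].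
Hypothesis HPd : forall j1 j2, 1 <= j1 <= i -> 1 <= j2 <= i -> j1 <> j2 -> P j1 <> P j2.
Hypothesis HQc : is_component M Q.
Hypothesis HQv : v (2 * i + 1) \in Q.
Hypothesis HQP : forall j, 1 <= j <= i -> Q <> P j.
Hypothesis HQt : is_cycle M Q \/ (exists k, 5 <= k /\ is_kpath M Q k) \/
              (is_kpath M Q 4 /\ ~ middle_vertex M Q (v (2 * i + 1))).
Hypothesis HQ5 : (exists k, is_kpath M Q k) ->
  3 <= #|comp (M :\ [set v (2 * i + 1); v (2 * i + 2)]) (v (2 * i + 2))|.
Hypothesis H3 : forall j, j <= i -> [set x (2 * j); v (2 * j + 1)] \in E :\: M.
Hypothesis H5 : [set v (2 * i + 1); v (2 * i + 2)] \in M.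

Ltac slia := (try clear HE); (try clear HMs); (try clear HMd); (try clear HMmax); (try clear Hu);
  (try clear HO); (try clear Hv0); (try clear Hx0); (try clear HP); (try clear HPd); (try clear HQc);
  (try clear HQv); (try clear HQP); (try clear HQt); (try clear HQ5); (try clear H3); (try clear H5); lia.

Definition e k := [set v (2 * k + 1); v (2 * k + 2)].
Definition f k := [set x (2 * k); v (2 * k + 1)].
Definition Rm := [set e (nat_of_ord j) | j : 'I_i.+1].
Definition Ad := [set f (nat_of_ord j) | j : 'I_i.+1].
Definition M' := (M :\: Rm) :|: Ad.
Definition Y := [set v (nat_of_ord k) | k : 'I_(2 * i + 3)] :|: [set x (2 * nat_of_ord j) | j : 'I_i.+1].

Lemma M'E : switch M i v x = M'.
Proof. by []. Qed.

Lemma vinj a b : a < 2 * i + 3 -> b < 2 * i + 3 -> v a = v b -> a = b.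
Proof.
move=> Ha Hb Hv.
have := nth_uniq (v 0) (s := [seq v k | k <- iota 0 (2 * i + 3)]) (i := a) (j := b).
rewrite size_map size_iota => /(_ Ha Hb Hu).
by rewrite !(nth_map 0) ?size_iota // !nth_iota // !add0n Hv eqxx => /esym/eqP.
Qed.

Lemma vneq a b : a < 2 * i + 3 -> b < 2 * i + 3 -> a != b -> v a != v b.
Proof. by move=> Ha Hb Hab; apply/eqP => /(vinj Ha Hb) /eqP; rewrite (negbTE Hab). Qed.

Lemma HM2 : edges2 M.
Proof. by move=> g Hg; apply: HE; apply: (subsetP HMs). Qed.

Lemma Rm_P g : reflect (exists2 k, k <= i & g = e k) (g \in Rm).
Proof.
apply: (iffP imsetP) => [[k _ ->]|[k Hk ->]]; first by exists k => //; rewrite -ltnS.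
by exists (Ordinal (Hk : k < i.+1)).
Qed.

Lemma Ad_P g : reflect (exists2 k, k <= i & g = f k) (g \in Ad).
Proof.
apply: (iffP imsetP) => [[k _ ->]|[k Hk ->]]; first by exists k => //; rewrite -ltnS.
by exists (Ordinal (Hk : k < i.+1)).
Qed.

Lemma Y_P w : reflect ((exists2 k, k < 2 * i + 3 & w = v k) \/ (exists2 j, j <= i & w = x (2 * j))) (w \in Y).
Proof.
rewrite inE; apply: (iffP orP) => [[/imsetP [k _ ->]|/imsetP [j _ ->]]|[[k Hk ->]|[j Hj ->]]].
- by left; exists k.
- by right; exists j => //; rewrite -ltnS.
- by left; apply/imsetP; exists (Ordinal Hk).
- by right; apply/imsetP; exists (Ordinal (Hj : j < i.+1)).
Qed.

Lemma fE k : k <= i -> f k \in E.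
Proof. by move/H3; rewrite inE => /andP []. Qed.

Lemma fnM k : k <= i -> f k \notin M.
Proof. by move/H3; rewrite inE => /andP []. Qed.

Lemma compO : is_component M O0.
Proof. by case/andP: HO => /existsP [u /eqP ->] _; exists u. Qed.

Lemma cO0 : #|O0| <= 2.
Proof. exact: obj_small HO. Qed.

Lemma cQ : 3 <= #|Q|.
Proof.
case: HQt => [/cycle_card //|[[k [Hk /is_kpath_card ->]]|[/is_kpath_card -> _]]] //.
slia.
Qed.

Lemma HQv2 : v (2 * i + 2) \in Q.
Proof. exact: comp_closed HQc HQv H5. Qed.

Lemma compP j : 1 <= j <= i -> is_component M (P j).
Proof. by case/HP. Qed.

Lemma cP j : 1 <= j <= i -> 3 <= #|P j|.
Proof. by case/HP => _ [k [Hk /is_kpath_card -> _]] _ _; slia. Qed.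

Lemma vP1 j : 1 <= j <= i -> v (2 * j - 1) \in P j.
Proof.
case/HP => _ [k [_ _ [p [Hk [m [Hm Ha _]]]]]] _ _.
rewrite {1}Ha; apply: (kpath_mem _ Hk).
by move: Hk => /and4P [_ /eqP -> _ _]; slia.
Qed.

Lemma vP2 j : 1 <= j <= i -> v (2 * j) \in P j.
Proof. by case/HP => _ _ []. Qed.

Lemma xP j : 1 <= j <= i -> x (2 * j) \in P j.
Proof.
move=> Hj; have := vP2 Hj; case/HP: Hj => [[u ->] _ _ Hx] Hv2.
rewrite -(comp_same Hv2) inE; move: Hx; rewrite inE; apply: connect_sub => a b.
by rewrite /madj !inE => /andP [_ H]; apply: connect1.
Qed.


Lemma Pinj j1 j2 : 1 <= j1 <= i -> 1 <= j2 <= i -> P j1 = P j2 -> j1 = j2.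
Proof. by move=> H1 H2 HPP; case: (j1 =P j2) => // Hne; case: (HPd H1 H2 Hne). Qed.

Definition Lv k := if k < i then P k.+1 else Q.
Definition Lx j := if j == 0 then O0 else P j.

Lemma locv k : k <= i -> [/\ is_component M (Lv k), v (2 * k + 1) \in Lv k & v (2 * k + 2) \in Lv k].
Proof.
rewrite /Lv; case: (ltnP k i) => Hk' Hk.
- have Hj : 1 <= k.+1 <= i by slia.
  have -> : 2 * k + 1 = 2 * k.+1 - 1 by slia.
  have -> : 2 * k + 2 = 2 * k.+1 by slia.
  by split; [apply: compP | apply: vP1 | apply: vP2].
- have -> : k = i by slia.
  by split; [apply: HQc | apply: HQv | apply: HQv2].
Qed.

Lemma cLv k : k <= i -> 3 <= #|Lv k|.
Proof. by rewrite /Lv; case: (ltnP k i) => H1 H2; [apply: cP; slia | apply: cQ]. Qed.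

Lemma Lv_inj k k' : k <= i -> k' <= i -> Lv k = Lv k' -> k = k'.
Proof.
rewrite /Lv => Hk Hk'; case: (ltnP k i) => H1; case: (ltnP k' i) => H2.
- by move=> HPP; have := Pinj (j1 := k.+1) (j2 := k'.+1); rewrite HPP; move=> /(_ ltac:(slia) ltac:(slia) erefl) [].
- by move=> HPP; exfalso; apply: (HQP (j := k.+1)); [slia | rewrite HPP].
- by move=> HPP; exfalso; apply: (HQP (j := k'.+1)); [slia | rewrite HPP].
- by slia.
Qed.

Lemma locx j : j <= i -> is_component M (Lx j) /\ x (2 * j) \in Lx j.
Proof.
rewrite /Lx; case: (j =P 0) => [->|Hj0] Hj; first by rewrite muln0 Hx0; split; [apply: compO | ].
have Hj' : 1 <= j <= i by slia.
by split; [apply: compP | apply: xP].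
Qed.

Lemma cLx j : j <= i -> 0 < j -> 3 <= #|Lx j|.
Proof. by rewrite /Lx; case: (j =P 0) => [->//|H0] H1 H2; apply: cP; slia. Qed.

Lemma Lx_inj j j' : j <= i -> j' <= i -> Lx j = Lx j' -> j = j'.
Proof.
rewrite /Lx => Hj Hj'; case: (j =P 0) => H1; case: (j' =P 0) => H2.
- by rewrite H1 H2.
- by move=> HOP; have := cO0; have := cP (j := j'); rewrite -HOP; slia.
- by move=> HOP; have := cO0; have := cP (j := j); rewrite HOP; slia.
- by move=> HPP; apply: Pinj HPP; slia.
Qed.

Lemma LxLv j k : j <= i -> k <= i -> Lx j = Lv k -> j = k.+1.
Proof.
rewrite /Lx /Lv => Hj Hk; case: (j =P 0) => H1; case: (ltnP k i) => H2.
- by move=> HOP; have := cO0; have := cP (j := k.+1); rewrite -HOP; slia.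
- by move=> HOP; have := cO0; have := cQ; rewrite -HOP; slia.
- by move=> HPP; apply: Pinj HPP; slia.
- by move=> HPQ; exfalso; apply: (HQP (j := j)); [slia | rewrite HPQ].
Qed.

Lemma comp_neq C1 C2 a b : is_component M C1 -> is_component M C2 -> a \in C1 -> b \in C2 ->
  C1 <> C2 -> a != b.
Proof. by move=> H1 H2 Ha Hb Hne; apply/eqP => Hab; subst; apply: Hne; apply: comp_disj H1 H2 Ha Hb. Qed.

Lemma endpoint_uniq C k p z s : is_component M C -> kpath_seq M C k p ->
  s < size p -> (s = 0 \/ s.+1 = size p) ->
  forall b c, [set nth z p s; b] \in M -> [set nth z p s; c] \in M -> b = c.
Proof.
move=> HC Hk Hs Hend b c Hb Hc.
case: (kpath_nbr HC Hk Hs Hb) => [[B1 B2]|[B1 B2]];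
case: (kpath_nbr HC Hk Hs Hc) => [[C1 C2]|[C1 C2]]; subst => //; exfalso; slia.
Qed.

Lemma Tj j : 1 <= j <= i ->
  x (2 * j) != v (2 * j - 1) /\ (x (2 * j) != v (2 * j) -> #|D M (x (2 * j))| <= 1).
Proof.
move=> Hj; case/HP: (Hj) => HC [k [Hk24 _ [p [Hk [m [/andP [Hm0 Hmk] Ha Hk4]]]]]] [Hv2 Hadj] Hx.
have Hs : size p = k.+1 by case/and4P: Hk => _ /eqP.
have Hup : uniq p by case/and4P: Hk.
rewrite (set_nth_default (v 0)) in Ha; last by rewrite Hs; slia.
rewrite Ha in Hadj Hx *.
case: (kpath_nbr HC Hk _ Hadj) => [|[H0 Hb]|[H1 Hb]]; first slia.
- case: m Hm0 Hmk Ha Hk4 Hadj Hx H0 Hb => // m _ Hmk Ha Hk4 Hadj Hx _ /= Hb.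
  rewrite Hb in Hx *.
  have Hm1 : m.+1 < size p by rewrite Hs; slia.
  have [t Ht Hxt] := kpath_split_lo HC Hk Hm1 (w := x (2 * j)) (z := v 0) ltac:(by move: Hx; rewrite inE).
  rewrite Hxt; split; first by rewrite nth_uniq ?Hs //; [apply/eqP | |]; slia.
  move=> Hne.
  have Ht0 : t = 0.
    have Htm : t != m by apply: contra Hne => /eqP ->.
    move: Htm => /eqP Htm; move: Hk4 Hk24 Hmk Ht Htm; move: (k) => kk; slia.
  rewrite Ht0; apply: deg_le1; first exact: HM2.
  by apply: (endpoint_uniq HC Hk); [rewrite Hs; slia | left].
- rewrite Hb in Hx *.
  have [t Ht Hxt] := kpath_split_hi HC Hk H1 (w := x (2 * j)) (z := v 0) ltac:(by move: Hx; rewrite inE).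
  rewrite Hxt; split; first by rewrite nth_uniq ?Hs //; [apply/eqP | |]; move: Ht; rewrite Hs; slia.
  move=> Hne.
  have Htk : t = k.
    have Htm : t != m.+1 by apply: contra Hne => /eqP ->.
    move: Htm => /eqP Htm; move: Hk4 Hk24 Hmk Ht Htm Hm0; rewrite Hs; move: (k) => kk; slia.
  rewrite Htk; apply: deg_le1; first exact: HM2.
  by apply: (endpoint_uniq HC Hk); [rewrite Hs; slia | right; rewrite Hs].
Qed.


Lemma eM k : k <= i -> e k \in M.
Proof.
move=> Hk; rewrite /e; case: (ltnP k i) => Hki.
- have Hj : 1 <= k.+1 <= i by slia.
  case/HP: Hj => _ _ [_ H] _; move: H.
  have -> : 2 * k.+1 - 1 = 2 * k + 1 by slia.
  by have -> : 2 * k.+1 = 2 * k + 2 by slia.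
- by have -> : k = i by slia.
Qed.

Lemma xv_neq j k : j <= i -> k <= i -> x (2 * j) != v (2 * k + 1).
Proof.
move=> Hj Hk; case: (j =P 0) => [->|Hj0].
  by rewrite muln0 Hx0; apply: vneq; slia.
have [HCx Hx] := locx Hj; have [HCv Hv _] := locv Hk.
case: (boolP (Lx j == Lv k)) => [/eqP HL|HL]; last first.
  by apply: (comp_neq HCx HCv Hx Hv) => /eqP; rewrite (negbTE HL).
have Hjk := LxLv Hj Hk HL.
have Hj1 : 1 <= j <= i by slia.
have := (Tj Hj1).1; suff -> : 2 * k + 1 = 2 * j - 1 by [].
by slia.
Qed.

Lemma xv2_neq j : j <= i -> x (2 * j) != v (2 * i + 2).
Proof.
move=> Hj; case: (j =P 0) => [->|Hj0].
  by rewrite muln0 Hx0; apply: vneq; slia.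
have [HCx Hx] := locx Hj; have [HCv _ Hv] := locv (leqnn i).
apply: (comp_neq HCx HCv Hx Hv) => HL.
by have := LxLv Hj (leqnn i) HL; slia.
Qed.

Lemma x_inj j j' : j <= i -> j' <= i -> x (2 * j) = x (2 * j') -> j = j'.
Proof.
move=> Hj Hj' Hxx.
have [HC1 H1] := locx Hj; have [HC2 H2] := locx Hj'.
apply: Lx_inj => //; apply: (comp_disj HC1 HC2 H1); by rewrite Hxx.
Qed.

Lemma funiq w k k' : k <= i -> k' <= i -> w \in f k -> w \in f k' -> k = k'.
Proof.
move=> Hk Hk'; rewrite /f !inE => /orP[]/eqP -> /orP[]/eqP H.
- exact: x_inj.
- by move: (xv_neq Hk Hk'); rewrite H eqxx.
- by move: (xv_neq Hk' Hk); rewrite H eqxx.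
- by have := vinj (a := 2 * k + 1) (b := 2 * k' + 1); move/(_ ltac:(slia) ltac:(slia) H); slia.
Qed.

Lemma f_inj k k' : k <= i -> k' <= i -> f k = f k' -> k = k'.
Proof.
move=> Hk Hk' Hf; apply: (funiq (w := x (2 * k))) => //; first by rewrite /f !inE eqxx.
by rewrite -Hf /f !inE eqxx.
Qed.

Lemma Ad_card : #|Ad| = i.+1.
Proof.
rewrite card_imset ?card_ord // => a b /f_inj H; apply: val_inj; apply: H; rewrite -ltnS //.
Qed.

Lemma Rm_sub : Rm \subset M.
Proof. by apply/subsetP => g /Rm_P [k Hk ->]; apply: eM. Qed.

Lemma Rm_card : #|Rm| <= i.+1.
Proof. by apply: (leq_trans (leq_imset_card _ _)); rewrite ?card_ord ?cardsT ?card_ord. Qed.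

Lemma Ad_nM g : g \in Ad -> g \notin M.
Proof. by case/Ad_P => k Hk ->; apply: fnM. Qed.

Lemma M'_size : #|M| <= #|M'|.
Proof.
rewrite /M' cardsU.
have -> : (M :\: Rm) :&: Ad = set0.
  apply/setP => g; rewrite !inE; apply/negP => /andP [/andP [_ HgM] HgA].
  by move: (Ad_nM HgA); rewrite HgM.
rewrite cards0 subn0 cardsD.
have -> : M :&: Rm = Rm by apply/setIidPr; apply: Rm_sub.
have h1 : #|Rm| <= #|M| := subset_leq_card Rm_sub.
have h2 := Rm_card. rewrite Ad_card. move: h1 h2. move: #|Rm| #|M| => a b. slia.
Qed.

Lemma M'_sub : M' \subset E.
Proof.
apply/subsetP => g; rewrite !inE => /orP[/andP [_ Hg]|/Ad_P [k Hk ->]].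
- exact: (subsetP HMs).
- exact: fE.
Qed.

Lemma HM'2 : edges2 M'.
Proof. by move=> g Hg; apply: HE; apply: (subsetP M'_sub). Qed.


Lemma cardD_lt (A R : {set {set T}}) a : a \in A -> a \in R -> #|A :\: R| < #|A|.
Proof.
move=> Ha HR; rewrite cardsD.
have h1 : 0 < #|A :&: R| by apply/card_gt0P; exists a; rewrite inE Ha HR.
have h2 : 0 < #|A| by apply/card_gt0P; exists a.
move: h1 h2; move: #|A :&: R| #|A| => p q; slia.
Qed.

Lemma DM'_sub w : D M' w \subset (D M w :\: Rm) :|: [set g in Ad | w \in g].
Proof.
apply/subsetP => g; rewrite !inE => /andP [/orP[/andP [HR HM]|HA] Hw].
- by rewrite HR HM Hw.
- by rewrite HA Hw orbT.
Qed.

Lemma F_le1 w : #|[set g in Ad | w \in g]| <= 1.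
Proof.
apply/card_le1_eqP => g1 g2; rewrite !inE => /andP [/Ad_P [k1 Hk1 ->] H1] /andP [/Ad_P [k2 Hk2 ->] H2].
by rewrite (funiq Hk1 Hk2 H1 H2).
Qed.

Lemma v0_nbr b c : [set v 0; b] \in M -> [set v 0; c] \in M -> b = c.
Proof.
move=> Hb Hc; apply/eqP; apply/negPn/negP => Hbc.
have Hb0 := pair_neq HM2 Hb; have Hc0 := pair_neq HM2 Hc.
have HbO := comp_closed compO Hv0 Hb; have HcO := comp_closed compO Hv0 Hc.
by have := card3 Hb0 Hc0 Hbc Hv0 HbO HcO; have := cO0; move: #|O0| => n; slia.
Qed.

Lemma deg_case w : (exists2 g, g \in Ad & w \in g) -> #|D M w :\: Rm| <= 1.
Proof.
move=> [g /Ad_P [k Hk ->]]; rewrite /f !inE => /orP[]/eqP ->.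
- case: (k =P 0) => [->|Hk0].
    rewrite muln0 Hx0; apply: (leq_trans (subset_leq_card (subsetDl _ _))).
    by apply: deg_le1; [apply: HM2 | apply: v0_nbr].
  have Hk1 : 1 <= k <= i by slia.
  case: (boolP (x (2 * k) == v (2 * k))) => [/eqP Hxv|Hxv].
  + case: k Hk Hk0 Hk1 Hxv => [//|k] Hk Hk0 Hk1 Hxv.
    have HeR : e k \in Rm by apply/Rm_P; exists k => //; slia.
    have HeD : e k \in D M (x (2 * k.+1)).
      rewrite inE eM; last by slia.
      rewrite /e Hxv !inE; have -> : 2 * k + 2 = 2 * k.+1 by slia.
      by rewrite eqxx orbT.
    have := cardD_lt HeD HeR; have := HMd (x (2 * k.+1)); rewrite /D.
    move: #|_ :\: Rm| #|[set _ in M | _]| => a b; slia.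
  + apply: (leq_trans (subset_leq_card (subsetDl _ _))).
    exact: (Tj Hk1).2.
- have HeR : e k \in Rm by apply/Rm_P; exists k.
  have HeD : e k \in D M (v (2 * k + 1)) by rewrite inE eM // /e !inE eqxx.
  have := cardD_lt HeD HeR; have := HMd (v (2 * k + 1)); rewrite /D.
  move: #|_ :\: Rm| #|[set _ in M | _]| => a b; slia.
Qed.

Lemma deg_M' w : #|D M' w| <= 2.
Proof.
apply: (leq_trans (subset_leq_card (DM'_sub w))); apply: (leq_trans (leq_card_setU _ _)).
case: (set_0Vmem [set g in Ad | w \in g]) => [->|[g]].
- rewrite cards0 addn0; apply: (leq_trans (subset_leq_card (subsetDl _ _))); exact: HMd.
- rewrite inE => /andP [HgA Hw].
  have := deg_case (ex_intro2 _ _ g HgA Hw); have := F_le1 w.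
  move: #|D M w :\: Rm| #|[set _ in Ad | _]| => a b; slia.
Qed.

Lemma M'_two : two_matching E M'.
Proof. by split; [apply: M'_sub | apply: deg_M']. Qed.

Lemma M'_max : max_two_matching E M'.
Proof.
split; first exact: M'_two.
by move=> M'' /HMmax H; apply: leq_trans H M'_size.
Qed.


Lemma e_nAd : e i \notin M'.
Proof.
rewrite !inE negb_or negb_and negbK; apply/andP; split.
- by apply/orP; left; apply/Rm_P; exists i.
- by apply/negP => /Ad_nM; rewrite eM.
Qed.

Lemma v2i1_nbr : exists2 u, [set v (2 * i + 1); u] \in M & u != v (2 * i + 2).
Proof.
case: (pickP (fun u => ([set v (2 * i + 1); u] \in M) && (u != v (2 * i + 2)))) => [u /andP [H1 H2]|Hno].
  by exists u.
exfalso.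
have Hnb : forall u, [set v (2 * i + 1); u] \in M -> u = v (2 * i + 2).
  by move=> u Hu'; move: (Hno u); rewrite Hu' /= => /negbFE/eqP.
pose M2 := e i |: M'.
have HM2s : M2 \subset E.
  apply/subsetP => g; rewrite in_setU1 => /orP[/eqP ->|Hg].
  - by apply: (subsetP HMs); apply: eM.
  - by apply: (subsetP M'_sub).
have HM2d : forall w, #|[set g in M2 | w \in g]| <= 2.
  move=> w; case: (boolP (w \in e i)) => Hw.
  - move: Hw; rewrite /e !inE => /orP[]/eqP Hw; subst w.
    + have : [set g in M2 | v (2 * i + 1) \in g] \subset [set e i; f i].
        apply/subsetP => g; rewrite inE => /andP [Hg Hwg]; move: Hg; rewrite /M2 in_setU1 => /orP[/eqP ->|Hg].
          by rewrite !inE eqxx.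
        move: Hg; rewrite /M' => /setUP [|/Ad_P [k Hk Hgk]].
        * move=> /setDP [HgM HgR].
          have [u Hgu] := edge_of HM2 HgM Hwg.
          move: HgR; rewrite Hgu (Hnb u) -?Hgu //.
          by move/negP; case; apply/Rm_P; exists i.
        * rewrite !inE; apply/orP; right; apply/eqP; rewrite Hgk; congr f.
          apply: (funiq (w := v (2 * i + 1)) Hk (leqnn i)); first by rewrite -Hgk.
          by rewrite /f !inE eqxx orbT.
      move/subset_leq_card => H; apply: (leq_trans H); rewrite cards2; by case: (_ != _).
    + have : [set g in M2 | v (2 * i + 2) \in g] \subset D M (v (2 * i + 2)).
        apply/subsetP => g; rewrite inE => /andP [Hg Hwg]; move: Hg; rewrite /M2 in_setU1 => /orP[/eqP ->|Hg].
          by rewrite inE eM //= /e !inE eqxx orbT.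
        rewrite inE Hwg andbT.
        move: Hg; rewrite /M' => /setUP [|/Ad_P [k Hk Hgk]].
        * by move=> /setDP [].
        * move: Hwg; rewrite Hgk /f !inE => /orP[]/eqP H.
          - by move: (xv2_neq Hk); rewrite H eqxx.
          - by have := vinj (a := 2 * i + 2) (b := 2 * k + 1); move/(_ ltac:(slia) ltac:(slia) H); slia.
      by move/subset_leq_card => H; exact: (leq_trans H (HMd _)).
  - have : [set g in M2 | w \in g] \subset D M' w.
      apply/subsetP => g; rewrite inE => /andP [Hg Hwg]; move: Hg; rewrite /M2 in_setU1 => /orP[/eqP Hg|Hg].
      + by move: Hw; rewrite -Hg Hwg.
      + by rewrite inE Hg Hwg.
    by move/subset_leq_card => H; exact: (leq_trans H (deg_M' _)).
have := HMmax (M' := M2) (conj HM2s HM2d).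
rewrite /M2 cardsU1 e_nAd; have := M'_size; move: #|M| #|M'| => a b; slia.
Qed.

Lemma kept k b : k <= i -> [set v (2 * k + 1); b] \in M -> b != v (2 * k + 2) ->
  [set v (2 * k + 1); b] \in M'.
Proof.
move=> Hk HbM Hb; rewrite /M' in_setU in_setD HbM andbT; apply/orP; left; apply/negP => /Rm_P [k' Hk' Heq].
case: (pair_eq Heq) => [[H1 H2]|[H1 H2]].
- have := vinj (a := 2 * k + 1) (b := 2 * k' + 1); move/(_ ltac:(slia) ltac:(slia) H1) => Hkk.
  have Hkk' : k' = k by slia.
  by move: Hb; rewrite H2 Hkk' eqxx.
- by have := vinj (a := 2 * k + 1) (b := 2 * k' + 2); move/(_ ltac:(slia) ltac:(slia) H1); slia.
Qed.

Lemma anchorA k : k <= i -> 3 <= #|comp M' (v (2 * k + 1))|.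
Proof.
move=> Hk.
have [b HbM Hb] : exists2 b, [set v (2 * k + 1); b] \in M & b != v (2 * k + 2).
  case: (ltnP k i) => Hki; last first.
    have Hki' : k = i by slia.
    by rewrite Hki'; exact: v2i1_nbr.
  have Hj : 1 <= k.+1 <= i by slia.
  case/HP: Hj => _ [kk [_ _ Hint]] _ _.
  have [b1 [b2 [H12 Hb1 Hb2]]] := internal_nbrs Hint.
  have E1 : 2 * k.+1 - 1 = 2 * k + 1 by slia.
  rewrite E1 in Hb1 Hb2.
  case: (b1 =P v (2 * k + 2)) => [Hb1e|Hb1e]; last by exists b1 => //; apply/eqP.
  by exists b2 => //; rewrite -Hb1e eq_sym.
have HbM' := kept Hk HbM Hb.
have HfM' : [set v (2 * k + 1); x (2 * k)] \in M'.
  by rewrite setUC !inE; apply/orP; right; apply/Ad_P; exists k.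
apply: (card3 (a := v (2 * k + 1)) (b := b) (c := x (2 * k))).
- exact: pair_neq HM2 HbM.
- by rewrite eq_sym; apply: xv_neq.
- apply/negP => /eqP Hbx; move: HbM; rewrite Hbx setUC.
  by move: (fnM Hk); rewrite /f => /negbTE ->.
- exact: comp_self.
- exact: comp_adj.
- exact: comp_adj.
Qed.

Lemma keptQ u c : u \in Q -> u != v (2 * i + 1) -> u != v (2 * i + 2) ->
  [set u; c] \in M -> [set u; c] \in M'.
Proof.
move=> HuQ Hu1 Hu2 HcM; rewrite /M' in_setU in_setD HcM andbT; apply/orP; left; apply/negP => /Rm_P [k Hk Heq].
have Hue : u \in e k by rewrite -Heq !inE eqxx.
case: (ltnP k i) => Hki.
- have [HCk H1 H2] := locv Hk.
  have HCe : u \in Lv k by move: Hue; rewrite /e !inE => /orP[]/eqP ->.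
  have HQL := comp_disj HQc HCk HuQ HCe.
  move: HQL; rewrite /Lv Hki => HQL.
  by apply: (HQP (j := k.+1)) => //; slia.
- have Hki' : k = i by slia.
  by move: Hue; rewrite Hki' /e !inE (negbTE Hu1) (negbTE Hu2).
Qed.

Lemma anchorB : 3 <= #|comp M' (v (2 * i + 2))|.
Proof.
have HQcomp : forall w, connect (madj M) (v (2 * i + 2)) w -> w \in Q.
  move=> w Hw; case: HQc => u0 HQu.
  by rewrite HQu -(comp_same (a := u0) (b := v (2 * i + 2))) -?HQu ?HQv2 // inE.
have Hpath : (exists k, is_kpath M Q k) -> 3 <= #|comp M' (v (2 * i + 2))|.
  move=> Hex; apply: (leq_trans (HQ5 Hex)); apply: subset_leq_card; apply/subsetP => w.
  rewrite !inE; apply: (transfer (S := Q)).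
  - move=> g; rewrite !inE => /andP [Hge HgM] HgM'.
    have HgR : g \in Rm by move: HgM'; rewrite HgM andbT negb_or negbK => /andP [].
    case/Rm_P: HgR => k Hk Hgk.
    have Hki : k < i.
      case: (ltnP k i) => // Hki; have Hk' : k = i by slia.
      by move: Hge; rewrite Hgk Hk' /e eqxx.
    exists (v (2 * k + 1)); first by rewrite Hgk /e !inE eqxx.
    have [HCk H1 _] := locv Hk.
    apply/negP => HQ1; have := comp_disj HQc HCk HQ1 H1; rewrite /Lv Hki.
    by apply: HQP; slia.
  - move=> w' Hw'; apply: HQcomp; move: Hw'; apply: connect_sub => a b.
    by rewrite /madj !inE => /andP [_ H]; apply: connect1.
case: HQt => [Hcyc|[[k [_ Hk]]|[Hk _]]]; last 2 first.
- by apply: Hpath; exists k.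
- by apply: Hpath; exists 4.
have [b1 [b2 [H12 Hb1 Hb2]]] := cycle_nbrs Hcyc HQv2.
have [u Hvu Hu1] : exists2 u, [set v (2 * i + 2); u] \in M & u != v (2 * i + 1).
  case: (b1 =P v (2 * i + 1)) => [Hb1e|Hb1e]; last by exists b1 => //; apply/eqP.
  by exists b2 => //; rewrite -Hb1e eq_sym.
have HuQ := comp_closed HQc HQv2 Hvu.
have Hu2 : u != v (2 * i + 2) by rewrite eq_sym; apply: pair_neq HM2 Hvu.
have [c1 [c2 [Hc12 Hc1 Hc2]]] := cycle_nbrs Hcyc HuQ.
have Hin : u \in comp M' (v (2 * i + 2)).
  by apply: comp_adj; rewrite setUC; apply: keptQ => //; rewrite setUC.
rewrite -(comp_same Hin).
apply: (card3 (a := u) (b := c1) (c := c2)) => //.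
- exact: pair_neq HM2 Hc1.
- exact: pair_neq HM2 Hc2.
- exact: comp_self.
- by apply: comp_adj; apply: keptQ.
- by apply: comp_adj; apply: keptQ.
Qed.


Lemma parity k : exists j, k = 2 * j \/ k = 2 * j + 1.
Proof.
elim: k => [|k [j [->|->]]]; first by exists 0; left.
- by exists j; right; slia.
- by exists j.+1; left; slia.
Qed.

Lemma comp_of C y : is_component M C -> y \in C -> comp M y = C.
Proof. by move=> [u ->] Hy; apply: comp_same. Qed.

Lemma R2 y : y \in Y -> comp M y = O0 \/ 3 <= #|comp M y|.
Proof.
case/Y_P => [[k Hk ->]|[j Hj ->]].
- have [j [Hkj|Hkj]] := parity k; subst k.
  + case: (j =P 0) => [->|Hj0]; first by left; rewrite muln0 (comp_of compO Hv0).
    have Hj' : j.-1 <= i by slia.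
    have [HC _ H2] := locv Hj'.
    have -> : 2 * j = 2 * j.-1 + 2 by slia.
    by right; rewrite (comp_of HC H2); apply: cLv.
  + have Hj' : j <= i by slia.
    have [HC H1 _] := locv Hj'.
    by right; rewrite (comp_of HC H1); apply: cLv.
- have [HC Hx] := locx Hj; rewrite (comp_of HC Hx).
  case: (j =P 0) => [Hj0|Hj0]; first by left; rewrite /Lx Hj0.
  by right; apply: cLx; slia.
Qed.

Lemma x_anchor j : j <= i -> 3 <= #|comp M' (x (2 * j))|.
Proof.
move=> Hj.
have Hin : v (2 * j + 1) \in comp M' (x (2 * j)).
  by apply: comp_adj; rewrite /M' in_setU; apply/orP; right; apply/Ad_P; exists j.
by rewrite -(comp_same Hin); apply: anchorA.
Qed.

Lemma v2j_x j : 1 <= j <= i -> connect (madj M') (v (2 * j)) (x (2 * j)).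
Proof.
move=> Hj; have Hx := (let: And4 _ _ _ H := HP Hj in H).
have HCP := compP Hj; have Hv2 := vP2 Hj.
move: Hx; rewrite inE; apply: (transfer (S := P j)).
- move=> g; rewrite in_setD1 => /andP [Hge HgM] HgM'.
  have HgR : g \in Rm.
    apply/negPn/negP => HgR; move: HgM'; rewrite /M' in_setU in_setD HgR HgM.
    by [].
  case/Rm_P: HgR => k Hk Hgk.
  exists (v (2 * k + 1)); first by rewrite Hgk /e !inE eqxx.
  apply/negP => Hin.
  have [HCk H1 H2] := locv Hk.
  have HL := comp_disj HCk HCP H1 Hin.
  have HLx : Lx j = Lv k by rewrite /Lx; case: (j =P 0) => [|_]; [slia | by rewrite HL].
  have Hjk := LxLv (ltac:(slia) : j <= i) Hk HLx.
  move: Hge; rewrite Hgk /e.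
  have -> : 2 * j - 1 = 2 * k + 1 by slia.
  have -> : 2 * j = 2 * k + 2 by slia.
  by rewrite eqxx.
- move=> w Hw; case: HCP => u0 Hu0.
  rewrite Hu0 -(comp_same (a := u0) (b := v (2 * j))) -?Hu0 // inE.
  move: Hw; apply: connect_sub => a b.
  by rewrite /madj !inE => /andP [_ H]; apply: connect1.
Qed.

Lemma R3 y : y \in Y -> 3 <= #|comp M' y|.
Proof.
case/Y_P => [[k Hk ->]|[j Hj ->]]; last exact: x_anchor.
have [j [Hkj|Hkj]] := parity k; subst k.
- case: (j =P 0) => [->|Hj0]; first by have := x_anchor (leq0n i); rewrite muln0 Hx0.
  case: (ltnP i j) => Hij.
  + have -> : 2 * j = 2 * i + 2 by slia.
    exact: anchorB.
  + have Hj1 : 1 <= j <= i by slia.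
    have Hin : x (2 * j) \in comp M' (v (2 * j)) by rewrite inE; apply: v2j_x.
    by rewrite -(comp_same Hin); apply: x_anchor.
- by apply: anchorA; slia.
Qed.

Lemma e_sub k : k <= i -> e k \subset Y.
Proof.
move=> Hk; apply/subsetP => w; rewrite /e in_set2 => /orP[]/eqP ->;
  apply/Y_P; left; [exists (2 * k + 1) | exists (2 * k + 2)] => //; slia.
Qed.

Lemma f_sub k : k <= i -> f k \subset Y.
Proof.
move=> Hk; apply/subsetP => w; rewrite /f in_set2 => /orP[]/eqP ->; apply/Y_P.
- by right; exists k.
- by left; exists (2 * k + 1) => //; slia.
Qed.

Lemma pair_ne0 (a b : T) : [set a; b] != set0.
Proof. by apply/set0Pn; exists a; rewrite !inE eqxx. Qed.

Lemma sdMM' : sdiff M M' Y.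
Proof.
move=> g; rewrite /M' in_setU in_setD.
case: (boolP (g \in M)) => HgM; case: (boolP (g \in Rm)) => HgR; case: (boolP (g \in Ad)) => HgA //= _.
all: first [ by case/Rm_P: HgR => k Hk ->; split; [apply: e_sub | apply: pair_ne0]
           | by case/Ad_P: HgA => k Hk ->; split; [apply: f_sub | apply: pair_ne0] ].
Qed.

Lemma final_count : (num_objects M').+1 = num_objects M.
Proof.
rewrite /num_objects.
have Hv0Y : v 0 \in Y by apply/Y_P; left; exists 0 => //; slia.
have HnotY : forall C, is_object M' C -> forall y, y \in Y -> y \notin C.
  move=> C HC y Hy; apply/negP => HyC.
  case/andP: (HC) => /existsP [u /eqP HCu] _.
  have := R3 Hy; rewrite HCu in HyC; rewrite (comp_same HyC) -HCu.
  by have := obj_small HC; move: #|C| => n; slia.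
have HO' : O0 \notin [set C | is_object M' C].
  by rewrite inE; apply/negP => HC; move: (HnotY _ HC _ Hv0Y); rewrite Hv0.
have -> : [set C | is_object M C] = O0 |: [set C | is_object M' C].
  apply/setP => C; rewrite in_setU1 !inE; apply/idP/orP.
  - move=> HC; case: (C =P O0) => [->|HCO]; [by left | right].
    apply: (obj_transfer sdMM') => // y Hy; apply/negP => HyC.
    case/andP: (HC) => /existsP [u /eqP HCu] _.
    rewrite HCu in HyC; have := R2 Hy; rewrite (comp_same HyC) -HCu.
    case=> [//|]; by have := obj_small HC; move: #|C| => n; slia.
  - case=> [/eqP -> //|HC].
    exact: (obj_transfer (sdiff_sym sdMM') (HnotY _ HC) HC).
by rewrite cardsU1 HO'.
Qed.

End Main.

Theorem mainTheorem6 (T : finType) (E M : {set {set T}}) (O0 : {set T})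
    (i : nat) (v x : nat -> T) :
  simple_graph E ->
  max_two_matching E M ->
  B_alternating E M O0 i v x ->
  max_two_matching E (switch M i v x) /\
  (num_objects (switch M i v x)).+1 = num_objects M.
Proof.
move=> HE [[HMs HMd] HMmax] [Hu [HO [Hv0 Hx0]] [P [Q [HP HPd [HQc HQv HQP] HQt HQ5]]] H3 H5].
split.
- by apply: (M'_max (O0 := O0) (P := P) (Q := Q)).
- by apply: (final_count (E := E) (M := M) (O0 := O0) (P := P) (Q := Q)).
Qed.
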